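(* Let $X_1,\dots,X_n$ be independent random variables, each symmetric about $0$. If $|X_k|\le_{\mathrm{st}}|X_l|$ for some pair $1\le k<l\le n$, then $$|\max(X_i\mid 1\le i\le n,\ i\ne l)|\le_{\mathrm{st}}|\max(X_i\mid 1\le i\le n)|,$$ $$|\min(X_i\mid 1\le i\le n,\ i\ne l)|\le_{\mathrm{st}}|\min(X_i\mid 1\le i\le n)|,$$ and if $|X_k|<_{\mathrm{st}}|X_l|$ both stochastic inequalities are strict. Consequently, if $|X_1|\le_{\mathrm{st}}\cdots\le_{\mathrm{st}}|X_n|$ then $(X_1,\dots,X_n)$ is SIAMX and SIAMN, and if $|X_1|<_{\mathrm{st}}\cdots<_{\mathrm{st}}|X_n|$ then $(X_1,\dots,X_n)$ is SSIAMX and SSIAMN.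
   Context: For random variables $U,V$, $U\le_{\mathrm{st}}V$ means $F_U(x)\ge F_V(x)$ for all real $x$ ($F$ the cdf), and $U<_{\mathrm{st}}V$ means additionally strict inequality for at least one $x$. $(X_1,\dots,X_n)$ is SIAMX if $|\max(X_1,\dots,X_{l-1})|\le_{\mathrm{st}}|\max(X_1,\dots,X_l)|$ for $l=2,\dots,n$ (with $\max(X_1)=X_1$), and SSIAMX if all these inequalities are strict; SIAMN and SSIAMN are the same with $\max$ replaced by $\min$. *)

(* Defs.v *)
From HB Require Import structures.
From mathcomp Require Import all_boot all_order all_algebra.
From mathcomp Require Import all_classical all_reals all_analysis.
Set Implicit Arguments. Unset Strict Implicit. Unset Printing Implicit Defensive.
Import Order.TTheory GRing.Theory Num.Theory.
Local Open Scope classical_set_scope.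
Local Open Scope ring_scope.

Section Defs.
Context {d : measure_display} {T : measurableType d} {R : realType}.
Variable P : probability T R.

Definition cdf (U : T -> R) (x : R) : \bar R := P [set w | U w <= x].

Definition st_le (U V : T -> R) : Prop := forall x : R, (cdf V x <= cdf U x)%E.

Definition st_lt (U V : T -> R) : Prop :=
  st_le U V /\ exists x : R, (cdf V x < cdf U x)%E.

Definition rv_abs (U : T -> R) : T -> R := fun w => `|U w|.

Definition symmetric0 (U : T -> R) : Prop :=
  forall B : set R, measurable B ->
    P (U @^-1` B) = P ((fun w => - U w) @^-1` B).

Definition mutual_indep (n : nat) (X : 'I_n -> T -> R) : Prop :=
  forall (J : {set 'I_n}) (B : 'I_n -> set R), (forall i, measurable (B i)) ->
    P (\bigcap_(i in [set i | i \in J]) (X i @^-1` B i))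
    = (\prod_(i in J) P (X i @^-1` B i))%E.

End Defs.

(* maximum / minimum of the values x_i, i in S (S nonempty; 0 if S empty) *)
Definition maxS {R : realType} (n : nat) (S : {set 'I_n}) (x : 'I_n -> R) : R :=
  let s := [seq x i | i <- enum S] in \big[Num.max/head 0 s]_(y <- s) y.
Definition minS {R : realType} (n : nat) (S : {set 'I_n}) (x : 'I_n -> R) : R :=
  let s := [seq x i | i <- enum S] in \big[Num.min/head 0 s]_(y <- s) y.

Definition rv_max {T : Type} {R : realType} (n : nat) (S : {set 'I_n})
  (X : 'I_n -> T -> R) : T -> R := fun w => maxS S (fun i => X i w).
Definition rv_min {T : Type} {R : realType} (n : nat) (S : {set 'I_n})
  (X : 'I_n -> T -> R) : T -> R := fun w => minS S (fun i => X i w).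

(* 0-indexed: prefix {0,...,l-1} *)
Definition prefix_set (n l : nat) : {set 'I_n} := [set i : 'I_n | (i < l)%N].

Section Siam.
Context {d : measure_display} {T : measurableType d} {R : realType}.
Variable P : probability T R.
Variables (n : nat) (X : 'I_n -> T -> R).

(* |max(X_1..X_{l-1})| <=_st |max(X_1..X_l)| for l = 2..n (1-indexed) *)
Definition SIAMX : Prop := forall l : nat, (2 <= l <= n)%N ->
  st_le P (rv_abs (rv_max (prefix_set n l.-1) X)) (rv_abs (rv_max (prefix_set n l) X)).
Definition SSIAMX : Prop := forall l : nat, (2 <= l <= n)%N ->
  st_lt P (rv_abs (rv_max (prefix_set n l.-1) X)) (rv_abs (rv_max (prefix_set n l) X)).
Definition SIAMN : Prop := forall l : nat, (2 <= l <= n)%N ->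
  st_le P (rv_abs (rv_min (prefix_set n l.-1) X)) (rv_abs (rv_min (prefix_set n l) X)).
Definition SSIAMN : Prop := forall l : nat, (2 <= l <= n)%N ->
  st_lt P (rv_abs (rv_min (prefix_set n l.-1) X)) (rv_abs (rv_min (prefix_set n l) X)).
End Siam.

(* Main.v *)
Require Import Defs.
From HB Require Import structures.
From mathcomp Require Import all_boot all_order all_algebra.
From mathcomp Require Import all_classical all_reals all_analysis.
From mathcomp Require Import ring lra.
Import Order.TTheory GRing.Theory Num.Theory.
Local Open Scope classical_set_scope.
Local Open Scope ring_scope.

Section S.
Context (d : measure_display) (T : measurableType d) (R : realType)
  (P : probability T R).

Definition pr (A : set T) : R := fine (P A).

Lemma prE A : measurable A -> P A = (pr A)%:E.
Proof.
move=> mA; rewrite /pr fineK // ge0_fin_numE ?measure_ge0 //.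
by rewrite (le_lt_trans (probability_le1 _ mA)) // ltry.
Qed.

Lemma pr_ge0 A : 0 <= pr A.
Proof. by rewrite /pr fine_ge0 // measure_ge0. Qed.

Lemma pr_le1 A : measurable A -> pr A <= 1.
Proof. by move=> mA; rewrite -lee_fin -prE // probability_le1. Qed.

Lemma pr_setC A : measurable A -> pr (~` A) = 1 - pr A.
Proof.
move=> mA; apply/EFin_inj; rewrite -prE; last exact: measurableC.
by rewrite probability_setC // prE.
Qed.

Lemma pr_D A B : measurable A -> measurable B -> B `<=` A ->
  pr (A `\` B) = pr A - pr B.
Proof.
move=> mA mB BA; apply/EFin_inj; rewrite -prE; last exact: measurableD.
have hA : (P A < +oo)%E by rewrite prE // ltry.
rewrite measureD //; have -> : A `&` B = B by apply/seteqP; split=> [x []|x Bx] //; split => //; exact: BA.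
by rewrite EFinB -(prE _ mA) -(prE _ mB).
Qed.

Lemma mle (x : R) : measurable [set y : R | y <= x].
Proof.
have -> : [set y : R | y <= x] = [set` `]-oo, x]] by apply/seteqP; split=> y /=; rewrite in_itv.
exact: measurable_itv.
Qed.
Lemma mlt (x : R) : measurable [set y : R | y < x].
Proof.
have -> : [set y : R | y < x] = [set` `]-oo, x[] by apply/seteqP; split=> y /=; rewrite in_itv.
exact: measurable_itv.
Qed.
Lemma mge (x : R) : measurable [set y : R | x <= y].
Proof.
have -> : [set y : R | x <= y] = [set` `[x, +oo[] by apply/seteqP; split=> y /=; rewrite in_itv /= andbT.
exact: measurable_itv.
Qed.
Lemma mgt (x : R) : measurable [set y : R | x < y].
Proof.
have -> : [set y : R | x < y] = [set` `]x, +oo[] by apply/seteqP; split=> y /=; rewrite in_itv /= andbT.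
exact: measurable_itv.
Qed.

Variables (n : nat) (X : 'I_n -> T -> R).
Hypothesis mX : forall i, measurable_fun setT (X i).
Hypothesis indep : mutual_indep P X.
Hypothesis sym : forall i, symmetric0 P (X i).

Lemma mpre i B : measurable B -> measurable (X i @^-1` B).
Proof. by move=> mB; rewrite -[_ @^-1` _]setTI; apply: mX. Qed.

Lemma pr_indep (S : {set 'I_n}) (B : 'I_n -> set R) : (forall i, measurable (B i)) ->
  pr (\bigcap_(i in [set i | i \in S]) (X i @^-1` B i)) = \prod_(i in S) pr (X i @^-1` B i).
Proof.
move=> mB; apply/EFin_inj; rewrite -prE; last first.
  by apply: fin_bigcap_measurable; [exact: finite_finset|move=> i _; apply: mpre].
rewrite indep // -prodEFin; apply: eq_bigr => i _; by rewrite -prE //; apply: mpre.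
Qed.


Lemma bigmax_le (s : seq R) (idx c : R) :
  (\big[Num.max/idx]_(y <- s) y <= c) = (idx <= c) && all (fun y => y <= c) s.
Proof.
elim: s => [|a s IH]; first by rewrite big_nil andbT.
by rewrite big_cons ge_max IH /= andbCA.
Qed.
Lemma bigmax_lt (s : seq R) (idx c : R) :
  (\big[Num.max/idx]_(y <- s) y < c) = (idx < c) && all (fun y => y < c) s.
Proof.
elim: s => [|a s IH]; first by rewrite big_nil andbT.
by rewrite big_cons gt_max IH /= andbCA.
Qed.
Lemma bigmin_ge (s : seq R) (idx c : R) :
  (c <= \big[Num.min/idx]_(y <- s) y) = (c <= idx) && all (fun y => c <= y) s.
Proof.
elim: s => [|a s IH]; first by rewrite big_nil andbT.
by rewrite big_cons le_min IH /= andbCA.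
Qed.
Lemma bigmin_gt (s : seq R) (idx c : R) :
  (c < \big[Num.min/idx]_(y <- s) y) = (c < idx) && all (fun y => c < y) s.
Proof.
elim: s => [|a s IH]; first by rewrite big_nil andbT.
by rewrite big_cons lt_min IH /= andbCA.
Qed.

Lemma head_all (S : {set 'I_n}) (x : 'I_n -> R) (p : pred R) :
  (exists i, i \in S) ->
  p (head 0 [seq x i | i <- enum S]) && all p [seq x i | i <- enum S] =
  [forall i in S, p (x i)].
Proof.
move=> [i0 Si0].
have : i0 \in enum S by rewrite mem_enum.
case E: (enum S) => [|j e] //= _.
apply/idP/forallP => [/andP[_ /andP[pj /allP H]] i|H].
  apply/implyP => Si; have : i \in enum S by rewrite mem_enum.
  rewrite E inE => /orP[/eqP->//|ie]; apply: H; exact: map_f.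
have pj : p (x j).
  by have := H j; rewrite -mem_enum E mem_head.
apply/andP; split => //; apply/andP; split => //; apply/allP => y /mapP[i ie ->].
by have := H i; rewrite -mem_enum E inE ie orbT.
Qed.

Lemma maxS_le (S : {set 'I_n}) (x : 'I_n -> R) (c : R) : (exists i, i \in S) ->
  (maxS S x <= c) = [forall i in S, x i <= c].
Proof. by move=> h; rewrite /maxS bigmax_le (head_all _ _ (fun y => y <= c)). Qed.
Lemma maxS_lt (S : {set 'I_n}) (x : 'I_n -> R) (c : R) : (exists i, i \in S) ->
  (maxS S x < c) = [forall i in S, x i < c].
Proof. by move=> h; rewrite /maxS bigmax_lt (head_all _ _ (fun y => y < c)). Qed.
Lemma minS_ge (S : {set 'I_n}) (x : 'I_n -> R) (c : R) : (exists i, i \in S) ->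
  (c <= minS S x) = [forall i in S, c <= x i].
Proof. by move=> h; rewrite /minS bigmin_ge (head_all _ _ (fun y => c <= y)). Qed.
Lemma minS_gt (S : {set 'I_n}) (x : 'I_n -> R) (c : R) : (exists i, i \in S) ->
  (c < minS S x) = [forall i in S, c < x i].
Proof. by move=> h; rewrite /minS bigmin_gt (head_all _ _ (fun y => c < y)). Qed.

Definition bc (S : {set 'I_n}) (B : set R) :=
  \bigcap_(i in [set i | i \in S]) (X i @^-1` B).

Lemma mbc S B : measurable B -> measurable (bc S B).
Proof.
by move=> mB; apply: fin_bigcap_measurable; [exact: finite_finset|move=> i _; apply: mpre].
Qed.

Lemma pr_bc S B : measurable B -> pr (bc S B) = \prod_(i in S) pr (X i @^-1` B).
Proof. by move=> mB; apply: (pr_indep S (fun=> B)). Qed.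

Definition Fc i x := pr (X i @^-1` [set y | y <= x]).
Definition Gc i x := pr (X i @^-1` [set y | y < - x]).

Lemma G_eq i x : Gc i x = 1 - Fc i x.
Proof.
rewrite /Gc /Fc /pr (sym i _ (mlt (-x))).
have -> : (fun w => - X i w) @^-1` [set y | y < - x] = ~` (X i @^-1` [set y | y <= x]).
  by apply/seteqP; split => w /=; rewrite ltrN2 ltNge => /negP.
by rewrite -/(pr _) pr_setC //; apply: mpre; apply: mle.
Qed.

Lemma Fc_ge0 i x : 0 <= Fc i x. Proof. exact: pr_ge0. Qed.
Lemma Gc_ge0 i x : 0 <= Gc i x. Proof. exact: pr_ge0. Qed.
Lemma Fc_le1 i x : Fc i x <= 1. Proof. apply: pr_le1; apply: mpre; apply: mle. Qed.

Lemma cdf_neg U x : x < 0 -> Defs.cdf P (rv_abs U) x = 0%E.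
Proof.
move=> x0; rewrite /Defs.cdf.
have -> : [set w | rv_abs U w <= x] = set0.
  apply/seteqP; split => w //=; rewrite /rv_abs => h.
  by have := le_lt_trans (normr_ge0 _) (le_lt_trans h x0); rewrite ltxx.
exact: measure0.
Qed.

Lemma cdf_abs i x : 0 <= x -> Defs.cdf P (rv_abs (X i)) x = (Fc i x - Gc i x)%:E.
Proof.
move=> x0; rewrite /Defs.cdf.
have -> : [set w | rv_abs (X i) w <= x] =
   (X i @^-1` [set y | y <= x]) `\` (X i @^-1` [set y | y < - x]).
  apply/seteqP; split => w /=; rewrite /rv_abs ler_norml.
    by move=> /andP[h1 h2]; split => //; rewrite ltNge h1.
  by move=> [h1 /negP]; rewrite -leNgt => h2; rewrite h1 h2.
rewrite prE; last by apply: measurableD; apply: mpre; [apply: mle|apply: mlt].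
rewrite pr_D //; try (apply: mpre; first [apply: mle|apply: mlt]).
move=> w /= h; apply: ltW; apply: (lt_le_trans h); lra.
Qed.

Lemma cdf_max (S : {set 'I_n}) (x : R) : (exists i, i \in S) -> 0 <= x ->
  Defs.cdf P (rv_abs (rv_max S X)) x =
  (\prod_(i in S) Fc i x - \prod_(i in S) Gc i x)%:E.
Proof.
move=> hS x0; rewrite /Defs.cdf.
have -> : [set w | rv_abs (rv_max S X) w <= x] =
   bc S [set y | y <= x] `\` bc S [set y | y < - x].
  apply/seteqP; split => w /=; rewrite /rv_abs /rv_max ler_norml.
    move=> /andP[h1 h2]; split.
      move=> i /= Si; move: h2; rewrite maxS_le // => /forallP/(_ i).
      by rewrite Si.
    move=> H; move: h1; rewrite leNgt maxS_lt // => /negP; apply.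
    by apply/forallP => i; apply/implyP => Si; apply: H.
  move=> [h1 h2]; apply/andP; split.
    rewrite leNgt maxS_lt //; apply/negP => /forallP H; apply: h2 => i /= Si.
    by have := H i; rewrite Si.
  by rewrite maxS_le //; apply/forallP => i; apply/implyP => Si; apply: h1.
rewrite prE; last by apply: measurableD; apply: mbc; [apply: mle|apply: mlt].
rewrite pr_D; try (apply: mbc; first [apply: mle|apply: mlt]); last first.
  move=> w /= h i Si; have /= := h i Si; move=> hi; apply: ltW.
  apply: (lt_le_trans hi); lra.
by rewrite !pr_bc //; [apply: mlt|apply: mle].
Qed.

Lemma cdf_min (S : {set 'I_n}) (x : R) : (exists i, i \in S) -> 0 <= x ->
  Defs.cdf P (rv_abs (rv_min S X)) x =
  (\prod_(i in S) Fc i x - \prod_(i in S) Gc i x)%:E.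
Proof.
move=> hS x0; rewrite /Defs.cdf.
have -> : [set w | rv_abs (rv_min S X) w <= x] =
   bc S [set y | - x <= y] `\` bc S [set y | x < y].
  apply/seteqP; split => w /=; rewrite /rv_abs /rv_min ler_norml.
    move=> /andP[h1 h2]; split.
      move=> i /= Si; move: h1; rewrite minS_ge // => /forallP/(_ i).
      by rewrite Si.
    move=> H; move: h2; rewrite leNgt minS_gt // => /negP; apply.
    by apply/forallP => i; apply/implyP => Si; apply: H.
  move=> [h1 h2]; apply/andP; split.
    by rewrite minS_ge //; apply/forallP => i; apply/implyP => Si; apply: h1.
  rewrite leNgt minS_gt //; apply/negP => /forallP H; apply: h2 => i /= Si.
  by have := H i; rewrite Si.
rewrite prE; last by apply: measurableD; apply: mbc; [apply: mge|apply: mgt].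
rewrite pr_D; try (apply: mbc; first [apply: mge|apply: mgt]); last first.
  move=> w /= h i Si; have /= := h i Si; move=> hi; apply: ltW.
  apply: (le_lt_trans _ hi); lra.
rewrite !pr_bc; try first [apply: mge|apply: mgt].
congr (_ - _)%:E; apply: eq_bigr => i _.
  rewrite /Fc /pr (sym i _ (mge (-x))); congr (fine (P _)).
  by apply/seteqP; split => w /=; rewrite lerN2.
rewrite /Gc /pr (sym i _ (mgt x)); congr (fine (P _)).
by apply/seteqP; split => w /=; rewrite ltrNr.
Qed.

Lemma GleF i x : 0 <= x -> Gc i x <= Fc i x.
Proof.
move=> x0; rewrite /Gc /Fc.
have mA : measurable (X i @^-1` [set y | y < - x]) by apply: mpre; apply: mlt.
have mB : measurable (X i @^-1` [set y | y <= x]) by apply: mpre; apply: mle.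
have sub : X i @^-1` [set y | y < - x] `<=` X i @^-1` [set y | y <= x].
  by move=> w /= h; apply: ltW; apply: (lt_le_trans h); lra.
have := pr_ge0 (X i @^-1` [set y | y <= x] `\` X i @^-1` [set y | y < - x]).
rewrite pr_D //; lra.
Qed.

Lemma Fc_gt0 i x : 0 <= x -> 0 < Fc i x.
Proof. move=> x0; have := @GleF i x x0; rewrite G_eq; lra. Qed.

Lemma core (S : {set 'I_n}) k l x : 0 <= x -> k \in S -> l \in S -> k != l ->
  (Fc l x <= Fc k x ->
  \prod_(i in S) Fc i x - \prod_(i in S) Gc i x <=
  \prod_(i in S :\ l) Fc i x - \prod_(i in S :\ l) Gc i x) /\
  (Fc l x < Fc k x ->
  \prod_(i in S) Fc i x - \prod_(i in S) Gc i x <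
  \prod_(i in S :\ l) Fc i x - \prod_(i in S :\ l) Gc i x).
Proof.
move=> x0 kS lS kl.
have kS' : k \in S :\ l by rewrite in_setD1 kl kS.
rewrite !(big_setD1 l lS) !(big_setD1 k kS') /=.
set a := \prod_(i in S :\ l :\ k) Fc i x.
set b := \prod_(i in S :\ l :\ k) Gc i x.
have b0 : 0 <= b by apply: prodr_ge0 => i _; apply: Gc_ge0.
have ba : b <= a by apply: ler_prod => i _; rewrite Gc_ge0 (@GleF _ x x0).
have a0 : 0 < a by apply: prodr_gt0 => i _; exact: (@Fc_gt0 _ x x0).
rewrite !G_eq.
have := Fc_le1 k x; have := Fc_le1 l x; have := Fc_ge0 k x; have := Fc_ge0 l x.
move: (Fc k x) (Fc l x) => fk fl h1 h2 h3 h4.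
have h5 : 0 <= (1 - fk) * fl * (a - b) by apply: mulr_ge0; [apply: mulr_ge0|]; lra.
split => h.
  have h6 : 0 <= a * (fk - fl) by apply: mulr_ge0; lra.
  nra.
have h6 : 0 < a * (fk - fl) by apply: mulr_gt0; lra.
nra.
Qed.

Lemma Fle_of (k l : 'I_n) (x : R) : 0 <= x -> (Defs.cdf P (rv_abs (X l)) x <= Defs.cdf P (rv_abs (X k)) x)%E ->
  Fc l x <= Fc k x.
Proof. by move=> x0; rewrite !cdf_abs // lee_fin !G_eq; lra. Qed.
Lemma Flt_of (k l : 'I_n) (x : R) : 0 <= x -> (Defs.cdf P (rv_abs (X l)) x < Defs.cdf P (rv_abs (X k)) x)%E ->
  Fc l x < Fc k x.
Proof. by move=> x0; rewrite !cdf_abs // lte_fin !G_eq; lra. Qed.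

Lemma main_le (S : {set 'I_n}) k l : k \in S -> l \in S -> k != l ->
  st_le P (rv_abs (X k)) (rv_abs (X l)) ->
  st_le P (rv_abs (rv_max (S :\ l) X)) (rv_abs (rv_max S X)) /\
  st_le P (rv_abs (rv_min (S :\ l) X)) (rv_abs (rv_min S X)).
Proof.
move=> kS lS kl H.
have kS' : k \in S :\ l by rewrite in_setD1 kl kS.
have e1 : exists i, i \in S by exists l.
have e2 : exists i, i \in S :\ l by exists k.
split => x; (case: (ltP x 0) => x0; [rewrite cdf_neg //; rewrite /Defs.cdf; exact: measure_ge0|]).
  rewrite !cdf_max // lee_fin; apply: (proj1 (@core S k l x x0 kS lS kl)).
  exact: (@Fle_of k l x x0 (H x)).
rewrite !cdf_min // lee_fin; apply: (proj1 (@core S k l x x0 kS lS kl)).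
exact: (@Fle_of k l x x0 (H x)).
Qed.

Lemma main_lt (S : {set 'I_n}) k l : k \in S -> l \in S -> k != l ->
  st_lt P (rv_abs (X k)) (rv_abs (X l)) ->
  st_lt P (rv_abs (rv_max (S :\ l) X)) (rv_abs (rv_max S X)) /\
  st_lt P (rv_abs (rv_min (S :\ l) X)) (rv_abs (rv_min S X)).
Proof.
move=> kS lS kl [Hle [x Hx]].
have [h1 h2] := @main_le S k l kS lS kl Hle.
have e1 : exists i, i \in S by exists l.
have e2 : exists i, i \in S :\ l by exists k; rewrite in_setD1 kl kS.
case: (ltP x 0) => x0.
  by move: Hx; rewrite !cdf_neg // ltxx.
have hF := @Flt_of k l x x0 Hx.
split; split => //; exists x.
  by rewrite !cdf_max // lte_fin; apply: (proj2 (@core S k l x x0 kS lS kl)).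
by rewrite !cdf_min // lte_fin; apply: (proj2 (@core S k l x x0 kS lS kl)).
Qed.
End S.
From mathcomp Require Import zify.
Lemma prefix_step n l : (2 <= l <= n)%N -> exists a b : 'I_n,
  [/\ (val a = (val b).+1)%N, a \in prefix_set n l, b \in prefix_set n l, b != a &
   prefix_set n l.-1 = prefix_set n l :\ a].
Proof.
move=> /andP[l2 ln].
have ha : (l.-1 < n)%N by lia.
have hb : (l.-2 < n)%N by lia.
exists (Ordinal ha), (Ordinal hb); split.
- rewrite /=; lia.
- rewrite inE /=; lia.
- rewrite inE /=; lia.
- rewrite -(inj_eq val_inj) /=; lia.
apply/setP => i; rewrite !inE -(inj_eq val_inj) /=; lia.
Qed.
Lemma setT_l n (l : 'I_n) : ([set: 'I_n] :\ l = [set~ l])%SET.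
Proof. by apply/setP => i; rewrite !inE andbT. Qed.

Theorem theorem5p2 (d : measure_display) (T : measurableType d) (R : realType)
  (P : probability T R) (n : nat) (X : 'I_n -> T -> R) :
  (forall i, measurable_fun setT (X i)) ->
  mutual_indep P X ->
  (forall i, symmetric0 P (X i)) ->
  (forall k l : 'I_n, (k < l)%N ->
     st_le P (rv_abs (X k)) (rv_abs (X l)) ->
     st_le P (rv_abs (rv_max [set~ l]%SET X)) (rv_abs (rv_max [set: 'I_n]%SET X)) /\
     st_le P (rv_abs (rv_min [set~ l]%SET X)) (rv_abs (rv_min [set: 'I_n]%SET X))) /\
  (forall k l : 'I_n, (k < l)%N ->
     st_lt P (rv_abs (X k)) (rv_abs (X l)) ->
     st_lt P (rv_abs (rv_max [set~ l]%SET X)) (rv_abs (rv_max [set: 'I_n]%SET X)) /\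
     st_lt P (rv_abs (rv_min [set~ l]%SET X)) (rv_abs (rv_min [set: 'I_n]%SET X))) /\
  ((forall i j : 'I_n, j = i.+1 :> nat -> st_le P (rv_abs (X i)) (rv_abs (X j))) ->
     SIAMX P X /\ SIAMN P X) /\
  ((forall i j : 'I_n, j = i.+1 :> nat -> st_lt P (rv_abs (X i)) (rv_abs (X j))) ->
     SSIAMX P X /\ SSIAMN P X).
Proof.
move=> mX indep sym.
have neq : forall k l : 'I_n, (k < l)%N -> k != l.
  by move=> k l kl; apply/eqP => e; rewrite e ltnn in kl.
split; [|split; [|split]].
- move=> k l kl H; rewrite -setT_l.
  exact: (@main_le d T R P n X mX indep sym _ _ _ (finset.in_setT k) (finset.in_setT l) (neq _ _ kl) H).
- move=> k l kl H; rewrite -setT_l.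
  exact: (@main_lt d T R P n X mX indep sym _ _ _ (finset.in_setT k) (finset.in_setT l) (neq _ _ kl) H).
- move=> Hc; split => l hl; have [a [b [ab aS bS ba ->]]] := @prefix_step n l hl.
    exact: (proj1 (@main_le d T R P n X mX indep sym _ _ _ bS aS ba (Hc b a ab))).
  exact: (proj2 (@main_le d T R P n X mX indep sym _ _ _ bS aS ba (Hc b a ab))).
- move=> Hc; split => l hl; have [a [b [ab aS bS ba ->]]] := @prefix_step n l hl.
    exact: (proj1 (@main_lt d T R P n X mX indep sym _ _ _ bS aS ba (Hc b a ab))).
  exact: (proj2 (@main_lt d T R P n X mX indep sym _ _ _ bS aS ba (Hc b a ab))).
Qed.
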